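(* Let $(S,M,T)$ be a triangulated unpunctured surface and let $\chi_1,\chi_2$ be two admissible cuts of $(S,M,T)$, with weights $w_1,w_2$ on $Q_T$. Suppose $\tilde\Lambda_1$ and $\tilde\Lambda_2$ are graded equivalent via the identity, with function $r\colon (Q_T)_0\to\mathbb{Z}$ satisfying $w_2(\alpha)=w_1(\alpha)+r(s(\alpha))-r(t(\alpha))$ for all arrows $\alpha$. Let $Q^*$ be the covering quiver of $\tilde\Lambda_1$ and, for $\ell\in\mathbb{Z}$, let the $\ell$-th level partition be the full subquiver of $Q^*$ on the vertices $(v,\ell)$ with $r(v)=\ell$. Then each connected component $\mathcal{C}$ of a level partition determines a connected region of $S$ (the union of the arcs corresponding to the vertices of $\mathcal{C}$ and the triangles of $T$ corresponding to the arrows of $\mathcal{C}$) which is bounded by sliding edges of $(\chi_1,\chi_2)$ and by $\partial S$.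
   Context: $S$ is a connected oriented Riemann surface with boundary and no punctures, $M\subset\partial S$ a finite set of marked points with at least one on each boundary component (if $S$ is a disc, $|M|\ge 5$). Arcs are non-self-crossing curves (up to isotopy) with endpoints in $M$, interior disjoint from $M$ and $\partial S$, not cutting out a monogon or digon; a triangulation $T$ is a maximal set of pairwise non-crossing arcs, cutting $S$ into triangles whose sides are arcs or boundary segments; a triangle is internal if no side is a boundary segment. The quiver $Q_T$ has a vertex $i$ for each arc $\tau_i\in T$ and, for each triangle and each ordered pair of its arc-sides $\tau_i,\tau_j$ with $\tau_j$ following $\tau_i$ counterclockwise, an arrow $i\to j$; internal triangles give oriented 3-cycles. $\Lambda_T=kQ_T/I_T$ ($k$ algebraically closed), $I_T$ generated by the length-two subpaths of the 3-cycles of internal triangles. An admissible cut $\chi$ chooses in each internal triangle one of its vertices $v$; the two sides $\tau_i,\tau_j$ at $v$ determine the arrow $i\to j$ of the 3-cycle (the local cut $\chi_{i,j}$), and $\chi$ is identified with this set of arrows. The surface algebra is $kQ_T/\langle I_T\cup\chi\rangle$. The graded algebra $\tilde\Lambda$ is $\Lambda_T$ graded by the weight $w(\alpha)=1$ if $\alpha\in\chi$ and $w(\alpha)=0$ otherwise; $\tilde\Lambda_i$ is this for $\chi_i$. The covering quiver $Q^*$ of $\tilde\Lambda_1$ has vertices $(Q_T)_0\times\mathbb{Z}$ and, for each arrow $\alpha\colon v\to v'$ of $Q_T$ and each $i$, an arrow $(v,i)\to(v',i+w_1(\alpha))$ (the copies of $Q_T$ at fixed second coordinate are the levels). ''Graded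 equivalent via the identity'' means there is $r$ as in the claim (equivalently, the graded equivalence is induced by the identity map of $Q_T$). A sliding edge of $(\chi_1,\chi_2)$ is an arc of $T$ that is a side of an internal triangle in which $\chi_1$ and $\chi_2$ choose different vertices and that is incident to both chosen vertices.
   Formalization: An arc of the region that borders a triangle outside the region whose two other sides are boundary segments need not be a sliding edge, and S may have punctures. Apart from conventions, each condition added here is assumed in the paper as well or is needed for the statement above to hold. *)

(* Defs.v *)
From HB Require Import structures.
From mathcomp Require Import all_boot all_order all_algebra.
From Stdlib Require Import Relations.
Set Implicit Arguments. Unset Strict Implicit. Unset Printing Implicit Defensive.
Import GRing.Theory Num.Theory.
Local Open Scope ring_scope.

(* Raw data of a triangulation T: the arcs of T, the boundary segments,
   the triangles, and for each triangle its three sides listed in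
   counterclockwise order: side t 0, side t 1, side t 2.
   Corner k of t is the vertex of t common to side t k and side t (k+1). *)
Record tsurf := TSurf {
  tarc : finType;
  bseg : finType;
  tri  : finType;
  side : tri -> 'I_3 -> tarc + bseg
}.

Definition nxt (k : 'I_3) : 'I_3 := ordS k.

Definition isArc (A B : Type) (e : A + B) : bool :=
  if e is inl _ then true else false.

Section Surf.
Variable X : tsurf.

Definition slot := (tri X * 'I_3)%type.

Definition tri_adj : rel (tri X) := fun t t' =>
  [exists k : 'I_3, exists k' : 'I_3,
     (side t k == side t' k') && isArc (side t k)].

(* identification of corners: gluing the slots (t,j) and (t',j') along
   their common arc (orientation reversing) identifies the end corner j
   of side j of t with the start corner (j'-1) of side j' of t' *)
Definition corner_rel : rel slot := fun c c' =>
  [&& (c.1, c.2) != (c'.1, nxt c'.2),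
      side c.1 c.2 == side c'.1 (nxt c'.2) & isArc (side c.1 c.2)].

Definition corner_srel : rel slot := fun c c' => corner_rel c c' || corner_rel c' c.

(* marked points = classes of corners *)
Definition nb_marked : nat :=
  #|[set [set c' | connect corner_srel c c'] | c : slot]|.

Definition corner_on_bd (c : slot) : bool :=
  ~~ isArc (side c.1 c.2) || ~~ isArc (side c.1 (nxt c.2)).

(* (S,M,T) is a triangulated, connected, oriented, unpunctured marked
   surface (all gluings are orientation reversing by construction) *)
Definition valid_tsurf : Prop :=
  [/\ (forall a : tarc X, #|[set s : slot | side s.1 s.2 == inl a]| = 2%N),
      (forall b : bseg X, #|[set s : slot | side s.1 s.2 == inr b]| = 1%N),
      (0 < #|tri X|)%N,
      (forall t t' : tri X, connect tri_adj t t') &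
      (* unpunctured: every marked point lies on the boundary *)
      (forall c : slot, exists2 c', connect corner_srel c c' & corner_on_bd c') /\
      (* if S is a disc (Euler characteristic 1), then |M| >= 5 *)
      (nb_marked + #|tri X| = #|tarc X| + #|bseg X| + 1)%N -> (5 <= nb_marked)%N].

Definition internal (t : tri X) : bool := [forall k : 'I_3, isArc (side t k)].

(* A cut: for each triangle a corner; only its values on internal
   triangles matter.  Choosing corner k of t cuts the arrow side k -> side (k+1). *)
Definition cut := tri X -> 'I_3.

(* weight of the arrow of Q_T in triangle t from side k to side (k+1) *)
Definition weight (chi : cut) (t : tri X) (k : 'I_3) : int :=
  if internal t && (chi t == k) then 1 else 0.

Definition qarrow (t : tri X) (k : 'I_3) (a b : tarc X) : Prop :=
  side t k = inl a /\ side t (nxt k) = inl b.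

Definition graded_equiv_id (chi1 chi2 : cut) (r : tarc X -> int) : Prop :=
  forall t k a b, qarrow t k a b ->
    weight chi2 t k = weight chi1 t k + r a - r b.

Definition cov_arrow (chi1 : cut) (t : tri X) (k : 'I_3) (i : int)
    (x y : tarc X * int) : Prop :=
  qarrow t k x.1 y.1 /\ x.2 = i /\ y.2 = i + weight chi1 t k.

Definition in_level (r : tarc X -> int) (l : int) (x : tarc X * int) : Prop :=
  x.2 = l /\ r x.1 = l.

Definition level_arrow chi1 r l t k i (x y : tarc X * int) : Prop :=
  cov_arrow chi1 t k i x y /\ in_level r l x /\ in_level r l y.

Definition level_adj chi1 r l (x y : tarc X * int) : Prop :=
  exists t k i, level_arrow chi1 r l t k i x y \/ level_arrow chi1 r l t k i y x.

Definition level_component chi1 r l (C : tarc X * int -> Prop) : Prop :=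
  [/\ (forall x, C x -> in_level r l x),
      (exists x, C x),
      (forall x y, C x -> level_adj chi1 r l x y -> C y) &
      (forall x y, C x -> C y -> clos_refl_sym_trans _ (level_adj chi1 r l) x y)].

Definition reg_arc (C : tarc X * int -> Prop) (a : tarc X) : Prop :=
  exists i, C (a, i).

Definition reg_tri chi1 r l (C : tarc X * int -> Prop) (t : tri X) : Prop :=
  exists k i x y, level_arrow chi1 r l t k i x y /\ C x.

Definition on_side (a : tarc X) (t : tri X) : Prop := exists k, side t k = inl a.

Definition reg_elt chi1 r l C (z : tarc X + tri X) : Prop :=
  match z with inl a => reg_arc C a | inr t => reg_tri chi1 r l C t end.

Definition incident (z z' : tarc X + tri X) : Prop :=
  match z, z' with
  | inl a, inr t => on_side a t
  | inr t, inl a => on_side a t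
  | _, _ => False
  end.

Definition region_connected chi1 r l C : Prop :=
  forall z z', reg_elt chi1 r l C z -> reg_elt chi1 r l C z' ->
    clos_refl_sym_trans _ (fun u v => [/\ reg_elt chi1 r l C u,
                                         reg_elt chi1 r l C v & incident u v]) z z'.

Definition sliding (chi1 chi2 : cut) (e : tarc X) : Prop :=
  exists t, [/\ internal t, chi1 t <> chi2 t &
    exists k, [/\ side t k = inl e,
                  k = chi1 t \/ k = nxt (chi1 t) &
                  k = chi2 t \/ k = nxt (chi2 t)]].

Definition ear (t : tri X) (e : tarc X) : Prop :=
  forall k, isArc (side t k) -> side t k = inl e.

(* The region is bounded by sliding edges and by dS: every arc of the
   region across which the region is left (into a triangle not in the
   region) is a sliding edge, or only separates the region from dS
   (the triangle beyond it has its two other sides on dS).  Boundary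
   segments are part of dS. *)
Definition region_bounded chi1 chi2 r l C : Prop :=
  forall (e : tarc X) (t' : tri X),
    (reg_arc C e \/ exists2 t, reg_tri chi1 r l C t & on_side e t) ->
    on_side e t' -> ~ reg_tri chi1 r l C t' ->
    sliding chi1 chi2 e \/ ear t' e.

End Surf.

(* Main.v *)
Require Import Defs.
From HB Require Import structures.
From mathcomp Require Import all_boot all_order all_algebra.
From mathcomp Require Import zify.
From Stdlib Require Import Relations Classical.
Import GRing.Theory Num.Theory.
Local Open Scope ring_scope.

Lemma pos3 (k m : 'I_3) : [|| m == k, m == nxt k | m == nxt (nxt k)].
Proof. by case: k => -[|[|[|n]]] Hk; case: m => -[|[|[|p]]] Hm. Qed.
Lemma nxt3 (k : 'I_3) : nxt (nxt (nxt k)) = k.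
Proof. by apply: val_inj; case: k => -[|[|[|n]]] Hk. Qed.
Lemma nxt_neq (k : 'I_3) : nxt k != k.
Proof. by case: k => -[|[|[|n]]] Hk. Qed.
Lemma nxt2_neq (k : 'I_3) : nxt (nxt k) != k.
Proof. by case: k => -[|[|[|n]]] Hk. Qed.

Lemma nxt_neq' (k : 'I_3) : k != nxt k.
Proof. by case: k => -[|[|[|n]]] Hk. Qed.
Lemma nxt2_neq' (k : 'I_3) : k != nxt (nxt k).
Proof. by case: k => -[|[|[|n]]] Hk. Qed.
Lemma nxt12 (k : 'I_3) : nxt k != nxt (nxt k).
Proof. by case: k => -[|[|[|n]]] Hk. Qed.
Lemma nxt21 (k : 'I_3) : nxt (nxt k) != nxt k.
Proof. by case: k => -[|[|[|n]]] Hk. Qed.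
Lemma f1 k : (nxt k == k) = false. Proof. exact: negbTE (nxt_neq k). Qed.
Lemma f2 k : (nxt (nxt k) == k) = false. Proof. exact: negbTE (nxt2_neq k). Qed.
Lemma f3 k : (k == nxt k) = false. Proof. exact: negbTE (nxt_neq' k). Qed.
Lemma f4 k : (k == nxt (nxt k)) = false. Proof. exact: negbTE (nxt2_neq' k). Qed.
Lemma f5 k : (nxt k == nxt (nxt k)) = false. Proof. exact: negbTE (nxt12 k). Qed.
Lemma f6 k : (nxt (nxt k) == nxt k) = false. Proof. exact: negbTE (nxt21 k). Qed.
Definition neqs := (eqxx, f1, f2, f3, f4, f5, f6).

Section Pf.
Variable X : tsurf.
Variables (chi1 chi2 : cut X) (r : tarc X -> int) (l : int).
Variable C : tarc X * int -> Prop.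
Hypothesis Hg : graded_equiv_id chi1 chi2 r.
Hypothesis HC : level_component chi1 r l C.

Lemma weight_int (chi : cut X) t k : internal t ->
  weight chi t k = if chi t == k then 1 else 0.
Proof. by rewrite /weight => ->. Qed.

Lemma weight_nint (chi : cut X) t k : ~~ internal t -> weight chi t k = 0.
Proof. by rewrite /weight => /negbTE ->. Qed.

Lemma closeC t k a b : qarrow t k a b -> weight chi1 t k = 0 ->
  r a = l -> r b = l -> C (a, l) \/ C (b, l) ->
  [/\ C (a, l), C (b, l) & reg_tri chi1 r l C t].
Proof.
move=> q w ra rb Hab.
case: HC => _ _ Hcl _.
have La : level_arrow chi1 r l t k l (a, l) (b, l).
  by split; [split; [|split] => //=; rewrite w addr0 | split; split].
have [Ca Cb] : C (a, l) /\ C (b, l).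
  case: Hab => H.
  - split => //; apply: (Hcl _ _ H); exists t, k, l; by left.
  - split => //; apply: (Hcl _ _ H); exists t, k, l; by right.
split => //; by exists k, l, (a, l), (b, l).
Qed.

Lemma w01 (chi : cut X) t k : weight chi t k = 0 \/ (weight chi t k = 1 /\ chi t = k).
Proof.
rewrite /weight; case: (internal t) => /=; last by left.
by case: eqP => [->|_]; [right|left].
Qed.

Lemma case1 e t' j : C (e, l) -> side t' j = inl e -> ~ reg_tri chi1 r l C t' ->
  sliding chi1 chi2 e \/ ear t' e.
Proof.
move=> Ce sj nreg.
have re : r e = l by case: HC => H _ _ _; case: (H _ Ce).
case Hint: (internal t'); last first.
  right => m; case sm: (side t' m) => [f|//] _.
  case/or3P: (pos3 j m) => /eqP Em; first by move: sm; rewrite Em sj.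
  - have q : qarrow t' j e f by split; rewrite // -Em.
    have := Hg _ _ _ _ q; rewrite !weight_nint ?Hint // re => H.
    have rf : r f = l by lia.
    by case: (closeC _ _ _ _ q (weight_nint _ _ _ (negbT Hint)) re rf (or_introl Ce)).
  - have q : qarrow t' m f e by split; rewrite // Em nxt3.
    have := Hg _ _ _ _ q; rewrite !weight_nint ?Hint // re => H.
    have rf : r f = l by lia.
    by case: (closeC _ _ _ _ q (weight_nint _ _ _ (negbT Hint)) rf re (or_intror Ce)).
left.
have arc k : exists a, side t' k = inl a.
  move/forallP: Hint => /(_ k); case: (side t' k) => [a|//]; by exists a.
have [f sf] := arc (nxt j); have [g sg] := arc (nxt (nxt j)).
have qj : qarrow t' j e f by [].
have qjj : qarrow t' (nxt (nxt j)) g e by split; rewrite // nxt3.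
have Gj := Hg _ _ _ _ qj; have Gjj := Hg _ _ _ _ qjj.
rewrite !(weight_int chi1 _ _ Hint) in Gj Gjj.
have W2 k : weight chi2 t' k <> 0 -> chi2 t' = k.
  by case: (w01 chi2 t' k) => [->|[_ ->]].
have nreg' a b k : qarrow t' k a b -> weight chi1 t' k = 0 -> r a = l -> r b = l ->
   C (a, l) \/ C (b, l) -> False.
  by move=> q w ra rb H; case: (closeC _ _ _ _ q w ra rb H).
case/or3P: (pos3 j (chi1 t')) => /eqP E1; rewrite E1 in Gj Gjj; rewrite ?neqs in Gj Gjj.
-
  have c2 : chi2 t' = nxt (nxt j).
    apply: W2 => H0; rewrite H0 re in Gjj.
    apply: (nreg' _ _ _ qjj); [by rewrite weight_int // E1 neqs|lia|done|by right].
  exists t'; split => //; first by rewrite E1 c2 => /eqP; rewrite neqs.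
  by exists j; split; [|left|right; rewrite c2 nxt3].
- (* c1 = nxt j : contradiction *)
  have c2a : chi2 t' = j.
    apply: W2 => H0; rewrite H0 re in Gj.
    apply: (nreg' _ _ _ qj); [by rewrite weight_int // E1 neqs|done|lia|by left].
  have c2b : chi2 t' = nxt (nxt j).
    apply: W2 => H0; rewrite H0 re in Gjj.
    apply: (nreg' _ _ _ qjj); [by rewrite weight_int // E1 neqs|lia|done|by right].
  by move: (nxt2_neq j); rewrite -c2b c2a eqxx.
-
  have c2 : chi2 t' = j.
    apply: W2 => H0; rewrite H0 re in Gj.
    apply: (nreg' _ _ _ qj); [by rewrite weight_int // E1 neqs|done|lia|by left].
  exists t'; split => //; first by rewrite E1 c2 => /eqP; rewrite neqs.
  by exists j; split; [|right; rewrite E1 nxt3|left].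
Qed.

Lemma bounded : region_bounded chi1 chi2 r l C.
Proof.
move=> e t' He [j sj] nreg.
have inl_l x : C x -> x.2 = l /\ r x.1 = l by case: HC => H _ _ _; case/H.
case: (classic (C (e, l))) => Ce; first exact: (case1 e t' j).
case: He => [[i Ci]|[t [k [i [[a ia] [[b ib] [[[q [xi yi]] [[/= ial ra] [/= yl rb]]] Cx]]]]] [m sm]]].
  by move: (inl_l _ Ci) => /= [ei _]; case: Ce; rewrite -ei.
rewrite /= in q ra rb.
have w0 : weight chi1 t k = 0 by rewrite /= in xi yi; lia.
rewrite ial in Cx.
have [Ca Cb _] := closeC _ _ _ _ q w0 ra rb (or_introl Cx).
case: q => sa sb.
case/or3P: (pos3 k m) => /eqP Em.
  by move: sm; rewrite Em sa => -[ea]; rewrite -ea in Ce.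
  by move: sm; rewrite Em sb => -[ea]; rewrite -ea in Ce.
have Hint : internal t.
  apply/forallP => m'; case/or3P: (pos3 k m') => /eqP ->; by rewrite ?sa ?sb -?Em ?sm.
have q1 : qarrow t (nxt k) b e by split; rewrite // -Em.
have q2 : qarrow t (nxt (nxt k)) e a by split; rewrite ?nxt3 -?Em.
have G1 := Hg _ _ _ _ q1; have G2 := Hg _ _ _ _ q2.
have W2 k' : weight chi2 t k' <> 0 -> chi2 t = k'.
  by case: (w01 chi2 t k') => [->|[_ ->]].
have W01 k' : weight chi2 t k' = 0 \/ weight chi2 t k' = 1.
  by case: (w01 chi2 t k') => [->|[->]]; auto.
rewrite !(weight_int chi1 _ _ Hint) in G1 G2 w0.
have re : r e <> l.
  move=> re; apply: Ce.
  case/or3P: (pos3 k (chi1 t)) => /eqP E1; rewrite E1 ?neqs in w0 G1 G2 => //.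
    by case: (closeC _ _ _ _ q2 ltac:(rewrite weight_int // E1 neqs) re ra (or_intror Ca)).
  by case: (closeC _ _ _ _ q1 ltac:(rewrite weight_int // E1 neqs) rb re (or_introl Cb)).
left; exists t.
case/or3P: (pos3 k (chi1 t)) => /eqP E1; rewrite E1 ?neqs in w0 G1 G2 => //.
  have c2 : chi2 t = nxt (nxt k).
    case: (W01 (nxt k)) => H1; case: (W01 (nxt (nxt k))) => H2; rewrite ?H1 ?H2 in G1 G2;
      try lia; by apply: W2; rewrite H2.
  split => //; first by rewrite E1 c2 => /eqP; rewrite neqs.
  by exists m; split; [| right; rewrite E1 Em | left; rewrite c2 Em].
have c2 : chi2 t = nxt k.
  case: (W01 (nxt k)) => H1; case: (W01 (nxt (nxt k))) => H2; rewrite ?H1 ?H2 in G1 G2;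
    try lia; by apply: W2; rewrite H1.
split => //; first by rewrite E1 c2 => /eqP; rewrite neqs.
by exists m; split; [| left; rewrite E1 Em | right; rewrite c2 Em].
Qed.

Let Rg := fun u v => [/\ reg_elt chi1 r l C u, reg_elt chi1 r l C v & incident u v].

Lemma adj_sym x y : level_adj chi1 r l x y -> level_adj chi1 r l y x.
Proof. by case=> t [k [i [H|H]]]; exists t, k, i; [right|left]. Qed.

Lemma step x y : C x -> level_adj chi1 r l x y ->
  C y /\ clos_refl_sym_trans _ Rg (inl x.1) (inl y.1).
Proof.
move=> Cx Hxy.
case: HC => _ _ Hcl _.
have Cy := Hcl _ _ Cx Hxy.
split => //.
case: Hxy => t [k [i Hor]].
have [Rt [sx sy]] : reg_tri chi1 r l C t /\ on_side x.1 t /\ on_side y.1 t.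
  case: Hor => H; case: (H) => [[[s1 s2] _] _].
  - by split; [exists k, i, x, y | split; [exists k|exists (nxt k)]].
  - by split; [exists k, i, y, x | split; [exists (nxt k)|exists k]].
have ax : reg_elt chi1 r l C (inl x.1) by case: x Cx {sx Hor} => a ia Cx; exists ia.
have ay : reg_elt chi1 r l C (inl y.1) by case: y Cy {sy Hor} => a ia Cy; exists ia.
apply: (rst_trans _ _ _ (inr t)); apply: rst_step.
  by split; [exact ax| exact Rt| exact sx].
by split; [exact Rt| exact ay| exact sy].
Qed.

Lemma path x y : clos_refl_sym_trans _ (level_adj chi1 r l) x y -> C x ->
  clos_refl_sym_trans _ Rg (inl x.1) (inl y.1).
Proof.
move=> H; move: (clos_rst_rst1n _ _ _ _ H) => {H}; elim=> [z _|x0 y0 z0 Hs _ IH Cx]; first exact: rst_refl.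
have Hxy : level_adj chi1 r l x0 y0 by case: Hs => //; apply: adj_sym.
have [Cy S] := step _ _ Cx Hxy.
exact: rst_trans S (IH Cy).
Qed.

Lemma toC z : reg_elt chi1 r l C z -> exists x, C x /\ clos_refl_sym_trans _ Rg z (inl x.1).
Proof.
case: z => [a [i Ci]|t Rt].
  by exists (a, i); split => //; apply: rst_refl.
have Rt' := Rt; case: Rt' => k [i [x [y [[[[s1 _] _] _] Cx]]]].
exists x; split => //; apply: rst_step; split => //; last by exists k.
by case: x Cx {s1} => a ia Cx; exists ia.
Qed.

Lemma connected : region_connected chi1 r l C.
Proof.
move=> z z' Hz Hz'.
have [x [Cx P1]] := toC _ Hz; have [x' [Cx' P2]] := toC _ Hz'.
case: HC => _ _ _ Hconn.
apply: (rst_trans _ _ _ _ _ P1).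
apply: (rst_trans _ _ _ _ _ (path _ _ (Hconn _ _ Cx Cx') Cx)).
by apply: rst_sym; exact P2.
Qed.

End Pf.

Theorem proposition3p9 (X : tsurf) (chi1 chi2 : cut X) (r : tarc X -> int) :
  valid_tsurf X ->
  graded_equiv_id chi1 chi2 r ->
  forall (l : int) (C : tarc X * int -> Prop),
    level_component chi1 r l C ->
    region_connected chi1 r l C /\ region_bounded chi1 chi2 r l C.
Proof.
move=> _ Hg l C HC; split; [exact: connected | exact: bounded].
Qed.
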